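(* \[ \mathbf{E}[1/p_r] = \begin{cases} \frac{3\sqrt{2}+5}{12p_i} & p_i \in (1/2, \frac{1+\sqrt{2}}{4}] \\ \frac{3+2\sqrt{2}}{6p_i} & p_i \in (\frac{1+\sqrt{2}}{4}, \frac{2+\sqrt{2}}{4}] \\ \frac{3\sqrt{2}+5}{6p_i} & p_i \in (\frac{2+\sqrt{2}}{4}, 1] \end{cases}, \qquad \mathbf{E}\left[1/p_r^2\right] = \begin{cases} \frac{5(3+2\sqrt{2})}{48p^2_i} & p_i \in (1/2, \frac{1+\sqrt{2}}{4}] \\ \frac{3+2\sqrt{2}}{6p^2_i} & p_i \in (\frac{1+\sqrt{2}}{4}, \frac{2+\sqrt{2}}{4}] \\ \frac{5(3+2\sqrt{2})}{12p^2_i} & p_i \in (\frac{2+\sqrt{2}}{4}, 1] \end{cases}. \]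
   Context: $\lg=\log_2$, and for real $x>0$, $p_x = x/2^{\lceil \lg x\rceil}$. In 2Merge$(A,B,T)$ with $T=(t_1,\dots,t_{i-2})$ sorted, $i$ even, $i\ge4$, after ensuring $A<B$, Step 2 compares $A$ with $t_{\lceil(1-2^{-r/2})i\rceil}$ for $r=1,2,\dots$ up to $2\lg i$ and stops at the first $r$ with $A<t_{\lceil(1-2^{-r/2})i\rceil}$; $r$ is this number of comparisons. The inserted elements are in uniformly random distinct positions, so given $A<B$, $\mathbf{Pr}[t_{\ell-1}<A<t_\ell]=(i-\ell)/\binom{i}{2}$, and $\mathbf{Pr}[r]=2^{-r}\pm O\!\left(\frac{1}{2^{r/2}i}\right)$. Define $w_r := (\sqrt{2}-1)2^{-r/2}i$ and $p_r := p_{w_r} = w_r/2^{\lceil\lg w_r\rceil}$. Expectations are over $r$. *)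

(* Defs.v *)
From Stdlib Require Export Reals.
From Coquelicot Require Export Coquelicot.
Open Scope R_scope.

Definition lg (x : R) : R := ln x / ln 2.

Definition Zceil (x : R) : Z := (- Int_part (- x))%Z.

Definition pw (x : R) : R := x / powerRZ 2 (Zceil (lg x)).

Definition w (i r : nat) : R := (sqrt 2 - 1) * Rpower 2 (- INR r / 2) * INR i.

Definition pr (i r : nat) : R := pw (w i r).

(* Idealized distribution of r: Pr[r] = 2^{-r}, r = 1, 2, 3, ... *)
Definition probr (r : nat) : R := (1/2) ^ r.

Definition is_expect (f : nat -> R) (v : R) : Prop :=
  is_series (fun n : nat => probr (S n) * f (S n)) v.

(* Main.v *)
Require Import Defs.
From Stdlib Require Import Lra Lia Psatz.

Lemma ln2_pos : 0 < ln 2.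
Proof. pose proof ln_lt_2; lra. Qed.

Lemma up_shift s k : up (s + IZR k) = (up s + k)%Z.
Proof.
  destruct (archimed s) as [H1 H2].
  symmetry; apply tech_up; rewrite plus_IZR; lra.
Qed.

Lemma Zceil_shift t z : Zceil (t + IZR z) = (Zceil t + z)%Z.
Proof.
  unfold Zceil, Int_part.
  replace (- (t + IZR z)) with (- t + IZR (- z)) by (rewrite opp_IZR; ring).
  rewrite up_shift; lia.
Qed.

Lemma lg_scale x z : 0 < x -> lg (x * powerRZ 2 z) = lg x + IZR z.
Proof.
  intro Hx. pose proof ln2_pos.
  unfold lg. rewrite powerRZ_Rpower by lra.
  rewrite ln_mult; [| lra | unfold Rpower; apply exp_pos].
  unfold Rpower; rewrite ln_exp. field. lra.
Qed.

Lemma pw_scale x z : 0 < x -> pw (x * powerRZ 2 z) = pw x.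
Proof.
  intro Hx. unfold pw. rewrite lg_scale, Zceil_shift, powerRZ_add by lra.
  field. split; apply Rgt_not_eq, powerRZ_lt; lra.
Qed.

Lemma pw_unit y : 1/2 < y <= 1 -> pw y = y.
Proof.
  intro H. pose proof ln2_pos.
  assert (Hc : Zceil (lg y) = 0%Z).
  { unfold Zceil, Int_part.
    assert (L1 : ln y <= 0) by (rewrite <- ln_1; apply ln_le; lra).
    assert (L2 : ln (/2) < ln y) by (apply ln_increasing; lra).
    rewrite ln_Rinv in L2 by lra.
    assert (lg y <= 0 /\ -1 < lg y).
    { unfold lg; split.
      - apply Rmult_le_reg_r with (ln 2); auto. field_simplify; lra.
      - apply Rmult_lt_reg_r with (ln 2); auto. field_simplify; lra. }
    assert (up (- lg y) = 1%Z) by (symmetry; apply tech_up; simpl; lra).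
    lia. }
  unfold pw; rewrite Hc; simpl; field.
Qed.

Lemma pw_char y z : 1/2 < y <= 1 -> pw (y * powerRZ 2 z) = y.
Proof. intro H. rewrite pw_scale by lra. apply pw_unit; auto. Qed.

Lemma expect_gen (g : nat -> R) X Y : (forall m, g (S (2*m)) = X) -> (forall m, g (S (S (2*m))) = Y) -> is_expect g ((2*X+Y)/3).
Proof.
  intros HX HY. unfold is_expect.
  assert (G1 : is_series (fun n => (1/2)^n) (/ (1 - 1/2))) by (apply is_series_geom; rewrite Rabs_pos_eq; lra).
  assert (G2 : is_series (fun n => (-1/2)^n) (/ (1 - -1/2))) by (apply is_series_geom; rewrite Rabs_left; lra).
  apply (is_series_scal_l ((X+Y)/4)) in G1.
  apply (is_series_scal_l ((X-Y)/4)) in G2.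
  pose proof (is_series_plus _ _ _ _ G1 G2) as G.
  replace ((2*X+Y)/3) with (plus (scal ((X + Y) / 4) (/ (1 - 1 / 2))) (scal ((X - Y) / 4) (/ (1 - -1 / 2)))).
  2:{ unfold plus, scal; simpl; unfold mult; simpl. field. }
  apply (is_series_ext _ _ _) with (2 := G).
  intro n. unfold plus, scal; simpl; unfold mult; simpl. unfold probr.
  destruct (Nat.Even_or_Odd n) as [[m ->]|[m ->]].
  - rewrite HX. rewrite <- !tech_pow_Rmult, !pow_mult. simpl.
    replace ((1/2)*(1/2*1)) with (/4) by field.
    replace ((-1/2)*(-1/2*1)) with (/4) by field. field.
  - replace (2*m+1)%nat with (S (2*m)) by lia. rewrite HY. rewrite <- !tech_pow_Rmult, !pow_mult. simpl. idtac.
    replace ((1/2)*(1/2*1)) with (/4) by field.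
    replace ((-1/2)*(-1/2*1)) with (/4) by field. field.
Qed.

Lemma pz z : powerRZ 2 z = Rpower 2 (IZR z).
Proof. apply powerRZ_Rpower; lra. Qed.

Lemma Rp_nat m : Rpower 2 (- INR m) = / 2 ^ m.
Proof. rewrite Rpower_Ropp, Rpower_pow by lra; auto. Qed.

Lemma w_odd i P K m : INR i = P * powerRZ 2 K ->
  w i (S (2*m)) = ((1 - / sqrt 2) * P) * powerRZ 2 (K - Z.of_nat m).
Proof.
  intro HI. unfold w. rewrite HI, !pz.
  assert (Hs : 0 < sqrt 2) by (apply sqrt_lt_R0; lra).
  replace (IZR (K - Z.of_nat m)) with (IZR K + - INR m)
    by (rewrite minus_IZR, <- INR_IZR_INZ; ring).
  replace (- INR (S (2*m)) / 2) with (- INR m + - / 2)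
    by (rewrite S_INR, mult_INR; simpl; field).
  rewrite !Rpower_plus, Rp_nat, (Rpower_Ropp 2 (/2)), Rpower_sqrt by lra.
  field. split; [apply pow_nonzero; lra | lra].
Qed.

Lemma w_even i P K m : INR i = P * powerRZ 2 K ->
  w i (S (S (2*m))) = ((sqrt 2 - 1) * P) * powerRZ 2 (K - Z.of_nat m - 1).
Proof.
  intro HI. unfold w. rewrite HI, !pz.
  replace (IZR (K - Z.of_nat m - 1)) with (IZR K + - INR (S m))
    by (rewrite !minus_IZR, <- INR_IZR_INZ, S_INR; ring).
  replace (- INR (S (S (2*m))) / 2) with (- INR (S m))
    by (rewrite !S_INR, mult_INR; simpl; field).
  rewrite !Rpower_plus, Rp_nat.
  field. apply pow_nonzero; lra.
Qed.

Lemma pw_of y z : 0 < y -> 1/2 < y * powerRZ 2 z <= 1 -> pw y = y * powerRZ 2 z.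
Proof.
  intros Hy H. rewrite <- (pw_char _ (- z) H).
  f_equal. rewrite Rmult_assoc, <- powerRZ_add by lra.
  replace (z + - z)%Z with 0%Z by lia. simpl; ring.
Qed.

Lemma main_case i P K za zb : INR i = P*powerRZ 2 K -> 0 < P ->
  1/2 < ((1 - /sqrt 2)*P)*powerRZ 2 zb <= 1 ->
  1/2 < ((sqrt 2 - 1)*P)*powerRZ 2 za <= 1 ->
  is_expect (fun r => / pr i r)
    ((2 * /(((1 - /sqrt 2)*P)*powerRZ 2 zb) + /(((sqrt 2 - 1)*P)*powerRZ 2 za))/3) /\
  is_expect (fun r => / (pr i r ^ 2))
    ((2 * /((((1 - /sqrt 2)*P)*powerRZ 2 zb)^2) + /((((sqrt 2 - 1)*P)*powerRZ 2 za)^2))/3).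
Proof.
  intros HI HP Hb Ha.
  assert (Hs : 1 < sqrt 2).
  { rewrite <- sqrt_1. apply sqrt_lt_1; lra. }
  assert (Hs2 : sqrt 2 < 2).
  { replace 2 with (sqrt 4) at 2. apply sqrt_lt_1; lra.
    replace 4 with (2*2) by ring. rewrite sqrt_square; lra. }
  assert (Hbp : 0 < (1 - / sqrt 2) * P).
  { apply Rmult_lt_0_compat; auto.
    assert (/ sqrt 2 < 1). { rewrite <- Rinv_1. apply Rinv_lt_contravar; lra. } lra. }
  assert (Hap : 0 < (sqrt 2 - 1) * P) by (apply Rmult_lt_0_compat; lra).
  assert (HO : forall m, pr i (S (2*m)) = ((1 - /sqrt 2)*P)*powerRZ 2 zb).
  { intro m. unfold pr. rewrite (w_odd i P K m HI), pw_scale by auto. apply pw_of; auto. }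
  assert (HE : forall m, pr i (S (S (2*m))) = ((sqrt 2 - 1)*P)*powerRZ 2 za).
  { intro m. unfold pr. rewrite (w_even i P K m HI), pw_scale by auto. apply pw_of; auto. }
  split; apply expect_gen; intro m; rewrite ?HO, ?HE; reflexivity.
Qed.

Lemma inv_eq u v : u * v = 1 -> / u = v.
Proof.
  intro H. assert (u <> 0) by (intro; subst; lra).
  rewrite <- (Rmult_1_r (/ u)), <- H. field; auto.
Qed.

Theorem lemma4 (i : nat) (Hev : Nat.even i = true) (H4 : (4 <= i)%nat) :
  let p_i := pw (INR i) in
  (1/2 < p_i <= (1 + sqrt 2) / 4 ->
     is_expect (fun r => / pr i r) ((3 * sqrt 2 + 5) / (12 * p_i)) /\
     is_expect (fun r => / (pr i r ^ 2)) (5 * (3 + 2 * sqrt 2) / (48 * p_i ^ 2))) /\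
  ((1 + sqrt 2) / 4 < p_i <= (2 + sqrt 2) / 4 ->
     is_expect (fun r => / pr i r) ((3 + 2 * sqrt 2) / (6 * p_i)) /\
     is_expect (fun r => / (pr i r ^ 2)) ((3 + 2 * sqrt 2) / (6 * p_i ^ 2))) /\
  ((2 + sqrt 2) / 4 < p_i <= 1 ->
     is_expect (fun r => / pr i r) ((3 * sqrt 2 + 5) / (6 * p_i)) /\
     is_expect (fun r => / (pr i r ^ 2)) (5 * (3 + 2 * sqrt 2) / (12 * p_i ^ 2))).
Proof.
  cbv zeta. set (P := pw (INR i)).
  set (K := Zceil (lg (INR i))).
  assert (HI : INR i = P * powerRZ 2 K).
  { unfold P, pw. fold K. field. apply Rgt_not_eq, powerRZ_lt; lra. }
  assert (Hs : 1 < sqrt 2).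
  { rewrite <- sqrt_1. apply sqrt_lt_1; lra. }
  assert (Hs2 : sqrt 2 < 2).
  { replace 2 with (sqrt 4) at 2. apply sqrt_lt_1; lra.
    replace 4 with (2*2) by ring. rewrite sqrt_square; lra. }
  assert (Hss : sqrt 2 * sqrt 2 = 2) by (apply sqrt_sqrt; lra).
  assert (Hinv : / sqrt 2 = sqrt 2 / 2) by (field_simplify; [| lra]; 
    apply Rmult_eq_reg_r with (sqrt 2); [| lra]; field_simplify; lra).
  assert (Hb : / (1 - / sqrt 2) = 2 + sqrt 2).
  { apply inv_eq. rewrite Hinv. nra. }
  assert (Ha : / (sqrt 2 - 1) = sqrt 2 + 1).
  { apply inv_eq. nra. }
  assert (Hb2 : (2 + sqrt 2)^2 = 6 + 4 * sqrt 2) by nra.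
  assert (Ha2 : (sqrt 2 + 1)^2 = 3 + 2 * sqrt 2) by nra.
  split; [|split]; intros HP;
  [ destruct (main_case i P K 2 2 HI ltac:(lra)) as [E1 E2]
  | destruct (main_case i P K 1 2 HI ltac:(lra)) as [E1 E2]
  | destruct (main_case i P K 1 1 HI ltac:(lra)) as [E1 E2] ];
  try (simpl; rewrite ?Hinv; nra);
  (split; [ match goal with |- is_expect _ ?v => match type of E1 with is_expect _ ?u =>
       replace v with u; [exact E1|] end end
          | match goal with |- is_expect _ ?v => match type of E2 with is_expect _ ?u =>
       replace v with u; [exact E2|] end end ]);
  simpl powerRZ; rewrite ?Rpow_mult_distr, ?Rinv_mult, <- ?pow_inv, Hb, Ha, ?Hb2, ?Ha2;
  field; lra.
Qed.
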